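(* Let $S$ be a finite semigroup. Every element of $S$ has a square root in $S$ if and only if every element of $S$ belongs to a maximal subgroup of $S$ of odd order.
   Context: A square root of $x\in S$ is an element $y\in S$ with $y^2=x$. A maximal subgroup of $S$ is a subgroup maximal under inclusion, equivalently the $\mathcal H$-class of an idempotent. *)

(* Defs.v *)
From mathcomp Require Import all_boot.
Set Implicit Arguments. Unset Strict Implicit. Unset Printing Implicit Defensive.

Definition is_subgroup (T : finType) (op : T -> T -> T) (G : {set T}) : Prop :=
  exists2 e, e \in G &
    [/\ (forall g, g \in G -> op e g = g /\ op g e = g),
        (forall g h, g \in G -> h \in G -> op g h \in G) &
        (forall g, g \in G -> exists2 h, h \in G & op g h = e /\ op h g = e)].

Definition maximal_subgroup (T : finType) (op : T -> T -> T) (G : {set T}) : Prop :=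
  is_subgroup op G /\
  (forall H : {set T}, is_subgroup op H -> G \subset H -> H = G).

Definition has_sqrt (T : finType) (op : T -> T -> T) (x : T) : Prop :=
  exists y, op y y = x.

(* Main.v *)
From Stdlib Require Import Classical.
Require Import Defs.
From mathcomp Require Import all_boot.
From mathcomp Require Import zify.

Set Implicit Arguments. Unset Strict Implicit. Unset Printing Implicit Defensive.

Section S.
Variables (T : finType) (op : T -> T -> T).
Hypothesis opA : forall x y z, op x (op y z) = op (op x y) z.

Definition pw x m := iter m (op x) x.

Lemma pM x a b : op (pw x a) (pw x b) = pw x (a + b).+1.
Proof.
elim: a => [|a IH] //=.
by rewrite -opA IH.
Qed.

Lemma inv_even (f : T -> T) : forall (A : {set T}),
  (forall a, a \in A -> [/\ f a \in A, f (f a) = a & f a <> a]) -> ~~ odd #|A|.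
Proof.
suff H : forall n (A : {set T}), #|A| <= n ->
  (forall a, a \in A -> [/\ f a \in A, f (f a) = a & f a <> a]) -> ~~ odd #|A|.
  by move=> A; apply: H.
elim=> [|n IH] A.
  by rewrite leqn0 => /eqP ->.
move=> Hc HA.
case: (eqVneq A set0) => [-> | /set0Pn [a aA]]; first by rewrite cards0.
have [faA ffa fan] := HA a aA.
have fa1 : f a \in A :\ a by rewrite in_setD1 faA andbT; apply/eqP.
set B := A :\ a :\ f a.
have cA : #|A| = (#|B|).+2.
  by rewrite (cardsD1 a A) aA (cardsD1 (f a) (A :\ a)) fa1.
have HB : forall b, b \in B -> [/\ f b \in B, f (f b) = b & f b <> b].
  move=> b; rewrite !in_setD1 => /and3P[/eqP bfa /eqP ba bA].
  have [fbA ffb fbn] := HA b bA.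
  split=> //; rewrite fbA andbT; apply/andP; split; apply/eqP.
  - by move=> E; apply: ba; rewrite -ffb E ffa.
  - by move=> E; apply: bfa; rewrite -ffb E.
have := IH B _ HB.
rewrite cA /= negbK => -> //.
by move: Hc; rewrite cA; lia.
Qed.

Lemma group_odd (G : {set T}) :
  injective (fun y => op y y) -> is_subgroup op G -> odd #|G|.
Proof.
move=> sqinj [e eG [Hid Hcl Hinv]].
pose f g := odflt g [pick h in G | (op g h == e) && (op h g == e)].
have Hf : forall g, g \in G -> [/\ f g \in G, op g (f g) = e & op (f g) g = e].
  move=> g gG; rewrite /f; case: pickP => [h /andP[hG /andP[/eqP h1 /eqP h2]] | H0] //=.
  have [h hG [h1 h2]] := Hinv g gG.
  by have := H0 h; rewrite hG h1 h2 !eqxx.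
have uniq : forall g h k, g \in G -> h \in G -> k \in G ->
   op h g = e -> op g k = e -> h = k.
  move=> g h k gG hG kG hg gk.
  have <- : op h e = h by case: (Hid h hG).
  by rewrite -gk opA hg; case: (Hid k kG).
have := @inv_even f (G :\ e).
rewrite (cardsD1 e G) eG /= => H; rewrite H //.
move=> a; rewrite in_setD1 => /andP[/eqP ae aG].
have [faG a1 a2] := Hf a aG.
have [ffaG b1 b2] := Hf (f a) faG.
have ffa : f (f a) = a by apply: (uniq (f a)).
split=> //.
- rewrite in_setD1 faG andbT; apply/eqP => E; apply: ae.
  by rewrite -a1 E; case: (Hid a aG).
- move=> E; apply: ae; apply: sqinj => /=.
  by rewrite -{1}E a2; case: (Hid e eG).
Qed.

Lemma exists_max (H : {set T}) : is_subgroup op H ->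
  exists G, maximal_subgroup op G /\ H \subset G.
Proof.
move Hn: #|~: H| => n.
elim: n {-2}n (leqnn n) H Hn => [|n IH] m Hm H Hn HH.
- exists H; split=> //; split=> // H' HH' sHH'.
  apply/setP/subset_eqP; rewrite sHH' andbT.
  apply/subsetP => x xH'; apply/negPn/negP => xH.
  have : x \in ~: H by rewrite in_setC.
  by move: Hm; rewrite -Hn leqn0 => /eqP/cards0_eq ->; rewrite in_set0.
- case: (classic (exists H', [/\ is_subgroup op H', H \subset H' & H' <> H])).
  + move=> [H' [HH' sHH' ne]].
    have pr : H \proper H'.
      rewrite properEneq sHH' andbT; apply/eqP => E; by apply: ne.
    have := proper_card pr.
    have := cardsC H; have := cardsC H' => c1 c2 lt.
    have [G [mG sG]] := IH #|~: H'| ltac:(lia) H' erefl HH'.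
    by exists G; split=> //; apply: subset_trans sG.
  + move=> NE; exists H; split=> //; split=> // H' HH' sHH'.
    apply: NNPP => ne; apply: NE; by exists H'.
Qed.

End S.

Theorem corollary4p10 (T : finType) (op : T -> T -> T)
  (opA : forall x y z, op x (op y z) = op (op x y) z) :
  (forall x : T, has_sqrt op x) <->
  (forall x : T, exists G : {set T},
      [/\ maximal_subgroup op G, x \in G & odd #|G|]).
Proof.
split.
- move=> Hs.
  pose sq := fun y => op y y.
  pose g x := odflt x [pick y | op y y == x].
  have gK : cancel g sq.
    move=> x; rewrite /g; case: pickP => [y /eqP //| H0] /=.
    by case: (Hs x) => y Hy; have := H0 y; rewrite Hy eqxx.
  have ginj : injective g := can_inj gK.
  have [g' gg' g'g] := injF_bij ginj.
  have sqE : forall y, sq y = g' y.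
    by move=> y; rewrite -{1}(g'g y) gK.
  have sqinj : injective sq.
    by move=> a b; rewrite !sqE; apply: (can_inj g'g).
  move=> x.
  have itE : forall m, iter m sq x = pw op x (2 ^ m).-1.
    elim=> [|m IH] //=; rewrite IH /sq pM //.
    have : 0 < 2 ^ m by rewrite expn_gt0.
    rewrite expnS; move: (2 ^ m) => q; by move=> ?; congr pw; lia.
  set n := (2 ^ order sq x).-1.
  have n0 : 0 < n.
    have := order_gt0 sq x; rewrite /n; move: (order sq x) => o.
    case: o => // o _; rewrite expnS; have : 0 < 2 ^ o by rewrite expn_gt0.
    move: (2 ^ o) => q; lia.
  have xn : pw op x n = x by rewrite -itE iter_order.
  have pn : forall a, pw op x (a + n) = pw op x a.
    elim=> [|a IH]; first by rewrite add0n xn.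
    by rewrite addSn /= IH.
  have pk : forall q a, pw op x (a + q * n) = pw op x a.
    elim=> [|q IH] a; first by rewrite mul0n addn0.
    by rewrite mulSn addnCA addnC pn IH.
  have pmod : forall a, pw op x a = pw op x (a %% n).
    by move=> a; rewrite {1}(divn_eq a n) addnC pk.
  pose G := [set pw op x (val i) | i : 'I_n].
  have memG : forall a, pw op x a \in G.
    move=> a; apply/imsetP; exists (Ordinal (ltn_pmod a n0)) => //.
  have HG : is_subgroup op G.
    exists (pw op x n.-1); first exact: memG.
    split.
    + move=> y /imsetP [i _ ->]; rewrite !pM //.
      have -> : (n.-1 + i).+1 = i + n by lia.
      have -> : (i + n.-1).+1 = i + n by lia.
      by rewrite pn.
    + move=> y z /imsetP [i _ ->] /imsetP [j _ ->]; rewrite pM //.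
    + move=> y /imsetP [i _ ->].
      have ilt := ltn_ord i.
      exists (pw op x (n.-1 + n.-1 - i)); first exact: memG.
      rewrite !pM //.
      have -> : (i + (n.-1 + n.-1 - i)).+1 = n.-1 + n by lia.
      have -> : (n.-1 + n.-1 - i + i).+1 = n.-1 + n by lia.
      by rewrite pn.
  have [G' [mG' sG]] := exists_max HG.
  exists G'; split=> //.
  + apply: (subsetP sG); exact: (memG 0).
  + apply: group_odd => //; exact: mG'.1.
- move=> H x.
  have [G [[[e eG [Hid Hcl Hinv]] _] xG oG]] := H x.
  have pG : forall a, pw op x a \in G.
    by elim=> [|a IH] //=; apply: Hcl.
  have [c pc] : exists c, pw op x c = e.
    pose h := fun i : 'I_(#|T|.+1) => pw op x i.
    have : ~ injective h.
      move=> hinj; have := leq_card h hinj; rewrite card_ord; lia.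
    move=> ninj.
    have [a [b [ab hab]]] : exists a b, a < b /\ pw op x a = pw op x b.
      apply: NNPP => NE; apply: ninj => i j hij; apply/val_inj => /=.
      case: (ltngtP i j) => // lt.
      * by exfalso; apply: NE; exists i, j.
      * by exfalso; apply: NE; exists j, i.
    exists (b - a).-1.
    have E : pw op x b = op (pw op x a) (pw op x (b - a).-1).
      rewrite pM //; congr pw; lia.
    have [k kG [k1 k2]] := Hinv _ (pG a).
    have : op k (pw op x a) = op k (pw op x b) by rewrite hab.
    rewrite E opA k2; case: (Hid _ (pG (b - a).-1)) => -> _.
    by move=> ->.
  have ex : exists k, (0 < k) && (pw op x k.-1 == e) by exists c.+1; rewrite pc eqxx.
  case: (ex_minnP ex) => k /andP[k0 /eqP pk] kmin.
  case ok : (odd k).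
  + exists (pw op x k./2); rewrite pM //.
    have -> : (k./2 + k./2).+1 = (k.-1).+1.
      have := odd_double_half k; rewrite ok -addnn; lia.
    by rewrite /= pk; case: (Hid x xG).
  + exfalso.
    set j := k./2.
    have kj : k = j + j by have := odd_double_half k; rewrite ok -addnn /=; lia.
    set t := pw op x j.-1.
    have tt : op t t = e by rewrite /t pM // -pk; congr pw; lia.
    have tG : t \in G by apply: pG.
    have te : t <> e.
      move=> E; have := kmin j; rewrite /t in E; rewrite E eqxx andbT.
      have : 0 < j by lia.
      by move=> -> /(_ isT); lia.
    have := @inv_even _ (fun g => op g t) G.
    rewrite oG /= => F; suff: false by []. apply: F => g gG; split.
    * by apply: Hcl.
    * by rewrite -opA tt; case: (Hid g gG).
    * move=> E; apply: te.
      have [h hG [h1 h2]] := Hinv g gG.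
      have : op h (op g t) = op h g by rewrite E.
      by rewrite opA h2; case: (Hid t tG) => -> _.
Qed.
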